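(* Every caterpillar with maximum degree at most $5$ is odd prime.
   Context: All graphs are finite and simple. A graph $G$ of order $N$ is odd prime if there is a bijection $\ell:V(G)\to\{1,3,\ldots,2N-1\}$ with $\gcd(\ell(u),\ell(v))=1$ for every edge $uv$. A caterpillar is a tree containing a path $v_1,\ldots,v_n$ (the spine) such that every vertex not on the spine is a leaf adjacent to one of the interior spine vertices $v_2,\ldots,v_{n-1}$. *)

(* Defs.v *)
From mathcomp Require Import all_boot.
Set Implicit Arguments. Unset Strict Implicit. Unset Printing Implicit Defensive.

Definition simple_graph (T : finType) (e : rel T) : Prop :=
  symmetric e /\ irreflexive e.

Definition deg (T : finType) (e : rel T) (x : T) : nat := #|[set y | e x y]|.

Definition acyclic (T : finType) (e : rel T) : Prop :=
  forall c : seq T, 3 <= size c -> uniq c -> ~~ cycle e c.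

Definition connected (T : finType) (e : rel T) : Prop :=
  forall x y : T, connect e x y.

Definition is_tree (T : finType) (e : rel T) : Prop :=
  0 < #|T| /\ connected e /\ acyclic e.

(* caterpillar: a tree containing a path v_1,...,v_n (the spine, a sequence of
   distinct vertices with consecutive ones adjacent) such that every vertex not
   on the spine is a leaf adjacent to an interior spine vertex v_2..v_{n-1}
   (0-based indices 1 .. n-2). *)
Definition caterpillar (T : finType) (e : rel T) : Prop :=
  is_tree e /\
  exists (x : T) (p : seq T),
    let s := x :: p in
    [/\ uniq s, path e x p &
      forall v : T, v \notin s ->
        deg e v = 1 /\
        exists i : nat, [/\ 0 < i, i < (size s).-1 & e (nth x s i) v]].

Definition max_degree_at_most (T : finType) (e : rel T) (k : nat) : Prop :=
  forall x : T, deg e x <= k.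

Definition odd_prime (T : finType) (e : rel T) : Prop :=
  exists l : T -> nat,
    [/\ injective l,
        (forall x, odd (l x) && (l x < 2 * #|T|)),
        (forall k, odd k -> k < 2 * #|T| -> exists x, l x = k) &
        (forall u v, e u v -> coprime (l u) (l v))].

(* Main.v *)
Require Import Defs.
From mathcomp Require Import all_boot zify.
Set Implicit Arguments. Unset Strict Implicit. Unset Printing Implicit Defensive.

Lemma cop_odd a : coprime (2 * a + 1) 2.
Proof. by rewrite coprime_sym coprime2n addn1 /= oddM. Qed.

Lemma cop_dist a d :
  (d == 1) || (d == 2) || (d == 4) || ((d == 3) && (a %% 3 != 1)) ->
  coprime (2 * a + 1) (2 * (a + d) + 1).
Proof.
move=> H.
have -> : 2 * (a + d) + 1 = (2 * a + 1) + 2 * d by lia.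
rewrite /coprime gcdnDl -/(coprime _ _) coprimeMr cop_odd /=.
case/orP: H => [/orP [/orP [/eqP -> | /eqP ->] | /eqP ->] | /andP [/eqP -> Ha]].
- exact: coprimen1.
- exact: cop_odd.
- by rewrite (_ : 4 = 2 * 2) // coprimeMr cop_odd.
- rewrite coprime_sym prime_coprime //. apply/negP => /dvdnP [q Hq]. lia.
Qed.

Definition validb (r a b : nat) : bool :=
  let G := a + b + 1 in
  ((G == 1) || (G == 2) || (G == 4) || ((G == 3) && (r %% 3 != 1))) &&
  ((b == 3) ==> ((r + G) %% 3 != 1)).

Definition choose (r a c : nat) : nat := if validb r a c then c else c.-1.

Lemma choose_ok r a c : r < 3 -> a <= 1 -> c <= 3 -> validb r a (choose r a c).
Proof.
by case: r => [|[|[|r]]] //; case: a => [|[|a]] //; case: c => [|[|[|[|c]]]].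
Qed.

Lemma choose_bounds r a c : choose r a c <= c /\ c <= choose r a c + 1.
Proof. rewrite /choose; case: validb; lia. Qed.

Section CoreS.
Variable c : nat -> nat.
Hypothesis hc : forall k, c k <= 3.
Hypothesis hc0 : c 0 = 0.

Fixpoint bp (k : nat) : nat * nat :=
  match k with
  | 0 => (0, 0)
  | k'.+1 => let: (P, b) := bp k' in
             let a := c k' - b in
             let b' := choose (P %% 3) a (c k) in
             (P + a + 1 + b', b')
  end.

Fixpoint Fs (k : nat) : nat := if k is k'.+1 then Fs k' + (c k').+1 else 0.

Definition Pk k := (bp k).1.
Definition bk k := (bp k).2.

Lemma bk_bounds k : bk k <= c k /\ c k <= bk k + 1.
Proof using hc hc0.
case: k => [|k]; first by rewrite /bk /= hc0.
rewrite /bk /=; case: (bp k) => P b /=. exact: choose_bounds.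
Qed.

Lemma Pk_S k : Pk k.+1 = Pk k + (c k - bk k) + 1 + bk k.+1.
Proof using hc hc0. by rewrite /Pk /bk /=; case: (bp k). Qed.

Lemma valid_S k : validb (Pk k) (c k - bk k) (bk k.+1).
Proof using hc hc0.
rewrite /Pk /bk /=; case E: (bp k) => [P b] /=.
have := bk_bounds k; rewrite /bk E /= => Hb.
have := @choose_ok (P %% 3) (c k - b) (c k.+1) (ltn_pmod _ (isT : 0 < 3)) ltac:(lia) (hc _).
by rewrite /validb modn_mod modnDml.
Qed.

Lemma Pk_Fs k : Pk k = Fs k + bk k.
Proof using hc hc0.
elim: k => [|k IH]; first by rewrite /Pk /bk.
rewrite Pk_S IH /=. have := bk_bounds k. lia.
Qed.

Lemma spine_cop k : coprime (2 * Pk k + 1) (2 * Pk k.+1 + 1).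
Proof using hc hc0.
have := valid_S k; rewrite /validb => /andP [H _].
rewrite Pk_S (_ : Pk k + (c k - bk k) + 1 + bk k.+1 = Pk k + (c k - bk k + bk k.+1 + 1)); last by lia.
exact: cop_dist.
Qed.

Definition lpos k j := if j < bk k then Pk k - bk k + j else Pk k + 1.

Lemma leaf_cop k j : j < c k -> coprime (2 * Pk k + 1) (2 * lpos k j + 1).
Proof using hc hc0.
move=> Hj; rewrite /lpos; case: ifP => Hjb; last first.
  exact: (@cop_dist (Pk k) 1 isT).
rewrite coprime_sym.
have HP := Pk_Fs k.
rewrite [X in coprime _ (2 * X + 1)](_ : Pk k = Pk k - bk k + j + (bk k - j)); last by lia.
apply: cop_dist.
have Hb := bk_bounds k; have := hc k => Hck.
case: k Hj Hjb HP Hb Hck => [|k] Hj Hjb HP Hb Hck; first by rewrite hc0 in Hj.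
have := valid_S k; rewrite /validb => /andP [_ H2].
have E := Pk_S k.
case Hb3: (bk k.+1 == 3); last first.
  have : bk k.+1 - j <= 2 by move/eqP: Hb3; lia.
  case: (bk k.+1 - j) (ltac:(lia) : 0 < bk k.+1 - j) => [|[|[|]]] //.
rewrite Hb3 /= in H2.
move/eqP: Hb3 => Hb3.
have Hj0 : j = 0 \/ 0 < j by lia.
case: Hj0 => [->|Hj0].
  rewrite Hb3 subn0 /= addn0. apply/eqP => H3; move/eqP: H2; apply.
  rewrite -H3. rewrite E Hb3. lia.
have : bk k.+1 - j <= 2 by lia.
case: (bk k.+1 - j) (ltac:(lia) : 0 < bk k.+1 - j) => [|[|[|]]] //.
Qed.

Lemma Fs_mono k m : k <= m -> Fs k <= Fs m.
Proof using hc hc0.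
move=> H; rewrite -(subnKC H); elim: (m - k) => [|d IH]; first by rewrite addn0.
rewrite addnS /=; lia.
Qed.

Lemma Fs_lt k o : o <= c k -> Fs k + o < Fs k.+1.
Proof using hc hc0. rewrite /=; lia. Qed.

Lemma Fs_inj k1 k2 o1 o2 : o1 <= c k1 -> o2 <= c k2 ->
  Fs k1 + o1 = Fs k2 + o2 -> k1 = k2 /\ o1 = o2.
Proof using hc hc0.
move=> H1 H2 E.
have Hk : k1 = k2.
  case: (ltngtP k1 k2) => // H.
  - have := Fs_mono H; have := Fs_lt H1; lia.
  - have := Fs_mono H; have := Fs_lt H2; lia.
split => //; subst; lia.
Qed.

Lemma Fs_find n m : m < Fs n -> exists k, [/\ k < n, Fs k <= m & m - Fs k <= c k].
Proof using hc hc0.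
elim: n => [|n IH] //= Hm.
case: (ltnP m (Fs n)) => H.
  by have [k [Hk H1 H2]] := IH H; exists k; split => //; lia.
exists n; split => //; lia.
Qed.

Definition offl k j := if j < bk k then j else (bk k).+1.

Lemma lpos_eq k j : lpos k j = Fs k + offl k j.
Proof using hc hc0. rewrite /lpos /offl Pk_Fs; case: ifP => _; lia. Qed.

Lemma offl_le k j : j < c k -> offl k j <= c k.
Proof using hc hc0. have := bk_bounds k; rewrite /offl; case: (ltnP j (bk k)) => ?; lia. Qed.

Lemma offl_inj k j1 j2 : j1 < c k -> j2 < c k -> offl k j1 = offl k j2 -> j1 = j2.
Proof using hc hc0. have := bk_bounds k; rewrite /offl; case: (ltnP j1 (bk k)) => ?; case: (ltnP j2 (bk k)) => ?; lia. Qed.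

Lemma offl_neq k j : offl k j <> bk k.
Proof using hc hc0. rewrite /offl; case: (ltnP j (bk k)) => ?; lia. Qed.

End CoreS.

Set Default Proof Using "All".
Section Graph.
Variables (T : finType) (e : rel T) (x : T) (p : seq T).
Hypotheses (esy : symmetric e) (eirr : irreflexive e) (acyc : acyclic e)
  (us : uniq (x :: p)) (pth : path e x p)
  (leafP : forall v : T, v \notin x :: p ->
        deg e v = 1 /\
        exists i : nat, [/\ 0 < i, i < (size (x :: p)).-1 & e (nth x (x :: p) i) v])
  (maxd : max_degree_at_most e 5).

Local Notation s := (x :: p).
Local Notation n := (size (x :: p)).
Local Notation sp i := (nth x (x :: p) i).

Lemma edge_sp i : i.+1 < n -> e (sp i) (sp i.+1).
Proof. move=> H; move/(pathP x): pth => /(_ i); apply; done. Qed.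

Definition att v := find (fun u => e u v) s.

Lemma leaf_att v : v \notin s ->
  [/\ 0 < att v, (att v).+1 < n, e (sp (att v)) v & forall w, e v w -> w = sp (att v)].
Proof.
move=> Hv; have [Hd [i [Hi0 Hin Hei]]] := leafP Hv.
have Hin' : i < n by lia.
have Hhas : has (fun u => e u v) s by apply/hasP; exists (sp i); [exact: mem_nth | exact Hei].
have Hf : e (sp (att v)) v := nth_find x Hhas.
have Hfl : att v < n by rewrite -has_find.
have [y Hy] : exists y, [set w | e v w] = [set y].
  by apply/cards1P; rewrite /deg in Hd; rewrite Hd.
have Hu : forall w, e v w -> w = y.
  move=> w Hw; have : w \in [set w | e v w] by rewrite inE.
  by rewrite Hy inE => /eqP.
have E1 : sp i = y by apply: Hu; rewrite esy.
have E2 : sp (att v) = y by apply: Hu; rewrite esy.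
have Ha : att v = i by apply/eqP; rewrite -(nth_uniq x Hfl Hin' us) E1 E2.
rewrite Ha; split => //.
by move=> w Hw; rewrite E1; exact: Hu.
Qed.

Definition L k := [seq w <- enum T | (w \notin s) && (att w == k)].
Definition cc k := size (L k).

Lemma L_uniq k : uniq (L k).
Proof. exact: filter_uniq (enum_uniq T). Qed.

Lemma mem_L k w : (w \in L k) = (w \notin s) && (att w == k).
Proof. by rewrite mem_filter mem_enum andbT. Qed.

Lemma cc0 : cc 0 = 0.
Proof.
rewrite /cc; case E: (L 0) => [|w l] //.
have : w \in L 0 by rewrite E mem_head.
rewrite mem_L => /andP [Hw /eqP Ha].
have [H0 _ _ _] := leaf_att Hw; lia.
Qed.

Lemma cc_le3 k : cc k <= 3.
Proof.
rewrite /cc; case E: (L k) => [|w l] //.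
rewrite -E.
have : w \in L k by rewrite E mem_head.
rewrite mem_L => /andP [Hw /eqP Ha].
have [H0 Hn He _] := leaf_att Hw; rewrite Ha in H0 Hn He.
pose q := sp k.-1 :: sp k.+1 :: L k.
have spL : forall j, j < n -> sp j \notin L k.
  by move=> j Hj; rewrite mem_L mem_nth.
have Uq : uniq q.
  rewrite /q !cons_uniq L_uniq andbT (spL k.+1) ?andbT; last lia.
  rewrite inE negb_or (spL k.-1) ?andbT; last lia.
  have Hk1 : k.-1 < n by apply: leq_ltn_trans (leq_pred k) _; lia.
  rewrite nth_uniq //; case: k {Hk1 E Ha He H0 Hn q spL} => [|k] //=; lia.
have Sq : {subset q <= [set y | e (sp k) y]}.
  move=> y; rewrite inE /= !inE => /orP [/eqP ->|/orP [/eqP ->|Hy]].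
  - rewrite esy; have := @edge_sp k.-1; rewrite prednK //; apply; lia.
  - apply: edge_sp; lia.
  - move: Hy; rewrite mem_L => /andP [Hy /eqP Hay].
    by have [_ _ Hey _] := leaf_att Hy; rewrite Hay in Hey.
have Sq2 : (mem q) \subset [set y | e (sp k) y] by apply/subsetP.
have := subset_leq_card Sq2.
rewrite (card_uniqP Uq) /= => H.
have := maxd (sp k); rewrite /deg; lia.
Qed.

Lemma cc_le3' : forall k, cc k <= 3. Proof. exact: cc_le3. Qed.

Definition pos v := if v \in s then Pk cc (index v s)
                    else lpos cc (att v) (index v (L (att v))).

Lemma pos_spine k : k < n -> pos (sp k) = Fs cc k + bk cc k.
Proof.
move=> Hk; rewrite /pos mem_nth // index_uniq //.
exact: (Pk_Fs cc_le3' cc0).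
Qed.

Lemma pos_leaf v : v \notin s ->
  [/\ index v (L (att v)) < cc (att v), att v < n &
      pos v = Fs cc (att v) + offl cc (att v) (index v (L (att v)))].
Proof.
move=> Hv; have [H0 Hn _ _] := leaf_att Hv.
rewrite /pos (negbTE Hv) (lpos_eq cc_le3' cc0); split => //; last lia.
by rewrite /cc index_mem mem_L Hv eqxx.
Qed.

Lemma pos_dec v : exists k o, [/\ k < n, o <= cc k & pos v = Fs cc k + o].
Proof.
case Hv: (v \in s).
  exists (index v s), (bk cc (index v s)); split.
  - by rewrite index_mem.
  - by case: (bk_bounds cc_le3' cc0 (index v s)).
  - by rewrite -{1}(nth_index x Hv) pos_spine // index_mem.
have [H1 H2 H3] := pos_leaf (negbT Hv).
exists (att v), (offl cc (att v) (index v (L (att v)))); split => //.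
exact: (offl_le cc_le3' cc0).
Qed.

Definition N := Fs cc n.

Lemma pos_lt v : pos v < N.
Proof.
have [k [o [Hk Ho ->]]] := pos_dec v.
apply: leq_trans (Fs_lt cc_le3' cc0 Ho) _; exact: (Fs_mono cc_le3' cc0).
Qed.

Lemma pos_inj : injective pos.
Proof.
move=> v1 v2 E.
case H1: (v1 \in s); case H2: (v2 \in s).
- have Hi1 : index v1 s < n by rewrite index_mem.
  have Hi2 : index v2 s < n by rewrite index_mem.
  move: E; rewrite -{1}(nth_index x H1) -{1}(nth_index x H2) !pos_spine // => E.
  have [Ek _] := Fs_inj cc_le3' cc0 (proj1 (bk_bounds cc_le3' cc0 _)) (proj1 (bk_bounds cc_le3' cc0 _)) E.
  by rewrite -(nth_index x H1) -(nth_index x H2) Ek.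
- have Hi1 : index v1 s < n by rewrite index_mem.
  have [A1 A2 A3] := pos_leaf (negbT H2).
  move: E; rewrite -{1}(nth_index x H1) pos_spine // A3 => E.
  have [Ek Eo] := Fs_inj cc_le3' cc0 (proj1 (bk_bounds cc_le3' cc0 _)) (offl_le cc_le3' cc0 A1) E.
  by move: Eo; rewrite Ek => /esym /(offl_neq cc_le3' cc0).
- have Hi2 : index v2 s < n by rewrite index_mem.
  have [A1 A2 A3] := pos_leaf (negbT H1).
  move: E; rewrite -{1}(nth_index x H2) pos_spine // A3 => E.
  have [Ek Eo] := Fs_inj cc_le3' cc0 (offl_le cc_le3' cc0 A1) (proj1 (bk_bounds cc_le3' cc0 _)) E.
  by move: Eo; rewrite Ek => /(offl_neq cc_le3' cc0).
- have [A1 A2 A3] := pos_leaf (negbT H1).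
  have [B1 B2 B3] := pos_leaf (negbT H2).
  move: E; rewrite A3 B3 => E.
  have [Ek Eo] := Fs_inj cc_le3' cc0 (offl_le cc_le3' cc0 A1) (offl_le cc_le3' cc0 B1) E.
  move: Eo A1; rewrite Ek => Eo A1.
  have Ej := offl_inj cc_le3' cc0 A1 B1 Eo.
  have M1 : v1 \in L (att v2) by rewrite mem_L H1 -Ek eqxx.
  have M2 : v2 \in L (att v2) by rewrite mem_L H2 eqxx.
  by have := congr1 (nth x (L (att v2))) Ej; rewrite !nth_index.
Qed.

Lemma pos_surj m : m < N -> exists v, pos v = m.
Proof.
move=> Hm; have [k [Hk H1 H2]] := Fs_find cc_le3' cc0 Hm.
have [Hb1 Hb2] := bk_bounds cc_le3' cc0 k.
case: (ltngtP (m - Fs cc k) (bk cc k)) => Ho.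
- have Hj : m - Fs cc k < size (L k) by rewrite -/(cc k); lia.
  have Mv : nth x (L k) (m - Fs cc k) \in L k by exact: mem_nth.
  move: (Mv); rewrite mem_L => /andP [Hv /eqP Ha].
  exists (nth x (L k) (m - Fs cc k)).
  have [_ _ ->] := pos_leaf Hv.
  rewrite Ha index_uniq ?L_uniq // /offl Ho; lia.
- have Hj : bk cc k < size (L k) by rewrite -/(cc k); lia.
  have Mv : nth x (L k) (bk cc k) \in L k by exact: mem_nth.
  move: (Mv); rewrite mem_L => /andP [Hv /eqP Ha].
  exists (nth x (L k) (bk cc k)).
  have [_ _ ->] := pos_leaf Hv.
  rewrite Ha index_uniq ?L_uniq // /offl ltnn; lia.
- exists (sp k); rewrite pos_spine //; lia.
Qed.

Lemma card_N : #|T| = N.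
Proof.
apply/eqP; rewrite eqn_leq; apply/andP; split.
  have := leq_card (fun v => Ordinal (pos_lt v)).
  rewrite card_ord; apply => a b /(congr1 val) /= E; exact: pos_inj.
pose g (m : 'I_N) := odflt x [pick v | pos v == m].
have Hg : forall m : 'I_N, pos (g m) = m.
  move=> m; rewrite /g; case: pickP => [v /eqP //|H].
  have [v Hv] := pos_surj (ltn_ord m).
  by have := H v; rewrite Hv eqxx.
have := leq_card g; rewrite card_ord; apply => a b E.
apply: ord_inj; by rewrite -(Hg a) -(Hg b) E.
Qed.

Lemma aux1 (i a b : nat) : i + a == i + b -> a = b.
Proof. move/eqP; lia. Qed.

Lemma aux2 (i a j m : nat) : a < 0 + (j - i).+1 -> i.+1 < j -> j < m -> i + a < m.
Proof. lia. Qed.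

Lemma no_chord i j : i.+1 < j -> j < n -> ~~ e (sp i) (sp j).
Proof.
move=> Hij Hj; apply/negP => He.
pose c := mkseq (fun t => sp (i + t)) (j - i).+1.
have Hc3 : 3 <= size c by rewrite size_mkseq; lia.
have Hu : uniq c.
  rewrite map_inj_in_uniq ?iota_uniq // => a b; rewrite !mem_iota => /andP [_ Ha] /andP [_ Hb] /eqP.
  by rewrite nth_uniq //; [apply: aux1 | apply: aux2 Ha Hij Hj | apply: aux2 Hb Hij Hj].
have := acyc Hc3 Hu; apply/negP; rewrite negbK.
rewrite (cycle_path x) -nth_last size_mkseq succnK nth_mkseq // subnKC; last lia.
apply/(pathP x) => t Ht.
case: t Ht => [|t] Ht.
  by rewrite /= /c addn0 esy.
change (e (nth x c t) (nth x c t.+1)).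
rewrite /c size_mkseq in Ht *; rewrite !nth_mkseq; try lia.
rewrite addnS; apply: edge_sp; lia.
Qed.

Lemma edge_cop u w : e u w -> coprime (2 * pos u + 1) (2 * pos w + 1).
Proof.
have leafcase : forall u w, u \notin s -> e u w -> coprime (2 * pos u + 1) (2 * pos w + 1).
  move=> u0 w0 Hu Hw.
  have [_ Hn _ Hun] := leaf_att Hu.
  have Hk : att u0 < n by lia.
  rewrite (Hun _ Hw) /pos (negbTE Hu) mem_nth // index_uniq // coprime_sym.
  apply: (leaf_cop cc_le3' cc0).
  by rewrite /cc index_mem mem_L Hu eqxx.
move=> E.
case Hu: (u \in s); last exact: leafcase (negbT Hu) E.
case Hw: (w \in s); last by rewrite coprime_sym; apply: leafcase (negbT Hw) _; rewrite esy.
have Hi : index u s < n by rewrite index_mem.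
have Hj : index w s < n by rewrite index_mem.
rewrite /pos Hu Hw.
have {E} : e (sp (index u s)) (sp (index w s)) by rewrite !nth_index.
case: (ltngtP (index u s) (index w s)) => H E.
- case: (ltngtP (index u s).+1 (index w s)) => H'.
  + by have := no_chord H' Hj; rewrite E.
  + lia.
  + rewrite -H'; exact: (spine_cop cc_le3' cc0).
- case: (ltngtP (index w s).+1 (index u s)) => H'.
  + by have := no_chord H' Hi; rewrite esy E.
  + lia.
  + rewrite -H' coprime_sym; exact: (spine_cop cc_le3' cc0).
- by move: E; rewrite H eirr.
Qed.

End Graph.

Theorem theorem4p4 (T : finType) (e : rel T) :
  simple_graph e -> caterpillar e -> max_degree_at_most e 5 -> odd_prime e.
Proof.
move=> [esy eirr] [[_ [_ acyc]] [x [p [us pth leafP]]]] maxd.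
exists (fun v => 2 * pos e x p v + 1); split.
- move=> a b E; apply: (pos_inj esy eirr acyc us pth leafP maxd); lia.
- move=> v; have := pos_lt esy eirr acyc us pth leafP maxd v.
  rewrite -(card_N esy eirr acyc us pth leafP maxd) => H.
  apply/andP; split; last lia.
  by rewrite addn1 /= oddM.
- move=> k Hk Hlt.
  have Hm : k./2 < N e x p.
    rewrite -(card_N esy eirr acyc us pth leafP maxd).
    have := odd_double_half k; rewrite Hk -muln2; lia.
  have [v Hv] := pos_surj esy eirr acyc us pth leafP maxd Hm.
  exists v; rewrite Hv; have := odd_double_half k; rewrite Hk -muln2; lia.
- move=> u w E; exact: (edge_cop esy eirr acyc us pth leafP maxd E).
Qed.
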